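(* Let $n,q$ be positive integers and $s_1,\dots,s_q\ge0$ integers with $\frac{q(q+1)}{2}+\sum_{k=1}^q k\,s_k=n$. Define $\overline{\alpha}_i=q-i+1+\sum_{k=i}^q s_k$ for $1\le i\le q$. Then: (1) $\overline{\alpha}=(\overline{\alpha}_1,\dots,\overline{\alpha}_q)\in\mathcal{P}(n)$; (2) $\overline{\alpha}_1>\overline{\alpha}_2>\cdots>\overline{\alpha}_q$; (3) $\delta(\overline{\alpha})=\big(1,2,\dots,q-1,q,q^{(s_q)},(q-1)^{(s_{q-1})},\dots,1^{(s_1)}\big)$; (4) $s_i=\overline{\alpha}_i-\overline{\alpha}_{i+1}-1$ for $1\le i\le q-1$, and $s_q=\overline{\alpha}_q-1$.
   Context: A partition of a positive integer $n$ is a finite non-increasing sequence $\alpha=(\alpha_1,\dots,\alpha_l)$ of positive integers with sum $n$; $\mathcal{P}(n)$ is the set of partitions of $n$, and $\alpha_i=0$ for $i>l$. The diagonal sequence is $\delta(\alpha)=(d_k)_{k\ge1}$ with $d_k=|\{i:1\le i\le k,\ \alpha_i+i-1\ge k\}|$, trailing zeros omitted. The notation $j^{(s)}$ denotes $s$ consecutive entries equal to $j$. *)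

(* Defs.v *)
From mathcomp Require Import all_boot.
Set Implicit Arguments. Unset Strict Implicit. Unset Printing Implicit Defensive.

(* A partition is represented as a seq nat (alpha_1, ..., alpha_l);
   alpha_i (1-indexed) is [nth 0 a i.-1], which is 0 for i > l. *)
Definition is_partition (n : nat) (a : seq nat) : bool :=
  [&& sorted geq a, all (fun x => 0 < x) a & sumn a == n].

Definition part_entry (a : seq nat) (i : nat) : nat := nth 0 a i.-1.

Definition diag_entry (a : seq nat) (k : nat) : nat :=
  count (fun i => k <= part_entry a i + i - 1) (iota 1 k).

Definition alphabar (q : nat) (s : nat -> nat) : seq nat :=
  [seq q - i + 1 + \sum_(i <= k < q.+1) s k | i <- iota 1 q].

Definition delta_target (q : nat) (s : nat -> nat) : seq nat :=
  iota 1 q ++ flatten [seq nseq (s j) j | j <- rev (iota 1 q)].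

(* Main.v *)
Require Import Defs.
From mathcomp Require Import all_boot zify.

Definition S q (s : nat -> nat) i := \sum_(i <= k < q.+1) s k.

Lemma S_out q s i : q < i -> S q s i = 0.
Proof. by move=> h; rewrite /S big_geq. Qed.

Lemma S_rec q s i : i <= q.+1 -> S q.+1 s i = S q s i + s q.+1.
Proof. by move=> h; rewrite /S big_nat_recr. Qed.

Lemma S_step q s i : i <= q -> S q s i = s i + S q s i.+1.
Proof. by move=> h; rewrite /S big_ltn. Qed.

Lemma pe_in q s i : 1 <= i <= q ->
  part_entry (alphabar q s) i = q - i + 1 + S q s i.
Proof.
move=> /andP[h1 h2]; rewrite /part_entry /alphabar (nth_map 0); last by rewrite size_iota; lia.
rewrite nth_iota; last by lia.
by have -> : 1 + i.-1 = i by lia.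
Qed.

Lemma pe_out q s i : q < i -> part_entry (alphabar q s) i = 0.
Proof.
move=> h; rewrite /part_entry /alphabar nth_default // size_map size_iota; lia.
Qed.

Lemma sorted_iota_map (r : rel nat) f m n :
  (forall i, m <= i -> i.+1 < m + n -> r (f i) (f i.+1)) ->
  sorted r (map f (iota m n)).
Proof.
elim: n m => [|n IH] m h //=.
case: n IH h => [|n] IH h //=.
apply/andP; split; first by apply: h; lia.
have := IH m.+1; rewrite /=; apply=> i h1 h2; apply: h; lia.
Qed.

Lemma L1 q s : \sum_(1<=i<q.+1) S q s i = \sum_(1<=k<q.+1) k * s k.
Proof.
elim: q => [|q IH]; first by rewrite !big_geq.
rewrite big_nat_recr //= [in RHS]big_nat_recr //=.
rewrite (@eq_big_nat _ _ _ 1 q.+1 _ (fun i => S q s i + s q.+1)); last first.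
  by move=> i hi; rewrite S_rec //; lia.
rewrite big_split /= IH sum_nat_const_nat S_rec // S_out //; lia.
Qed.

Lemma L2 q : (\sum_(1<=i<q.+1) (q - i + 1)).*2 = q * q.+1.
Proof.
elim: q => [|q IH]; first by rewrite big_geq.
rewrite big_nat_recr //=.
rewrite (@eq_big_nat _ _ _ 1 q.+1 _ (fun i => (q - i + 1) + 1)); last first.
  by move=> i hi; lia.
rewrite big_split /= sum_nat_const_nat. 
rewrite !doubleD IH -!muln2; lia.
Qed.

Lemma flat q s m : nth 0 (flatten [seq nseq (s j) j | j <- rev (iota 1 q)]) m
  = count (fun i => m < S q s i) (iota 1 q).
Proof.
elim: q m => [|q IH] m; first by rewrite /= nth_nil.
have E : iota 1 q.+1 = iota 1 q ++ [:: q.+1].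
  by rewrite -[q.+1]addn1 iotaD add1n addn1.
rewrite E rev_cat /= nth_cat size_nseq count_cat /= S_rec // S_out // add0n addn0.
case: ifP => hm.
  rewrite nth_nseq hm (eq_in_count (a2 := predT)); last by move=> i; rewrite mem_iota => hi /=; rewrite S_rec; lia.
  by rewrite count_predT size_iota addn1.
rewrite addn0; etransitivity; first exact: IH.
apply: eq_in_count => i; rewrite mem_iota => hi.
rewrite S_rec; last by lia.
lia.
Qed.

Lemma step q s i : 1 <= i < q ->
  part_entry (alphabar q s) i = part_entry (alphabar q s) i.+1 + s i + 1.
Proof.
move=> h; rewrite !pe_in; try lia.
rewrite (@S_step q s i); lia.
Qed.

Theorem proposition2p3 (n q : nat) (s : nat -> nat) :
  0 < n -> 0 < q ->
  (q * q.+1)./2 + \sum_(1 <= k < q.+1) k * s k = n ->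
  [/\ is_partition n (alphabar q s),
      sorted (fun x y => y < x) (alphabar q s),
      (forall k, 0 < k ->
         diag_entry (alphabar q s) k = nth 0 (delta_target q s) k.-1),
      (forall i, 1 <= i < q ->
         s i = part_entry (alphabar q s) i
               - part_entry (alphabar q s) i.+1 - 1)
    & s q = part_entry (alphabar q s) q - 1].
Proof.
move=> n0 q0 hn.
have srt : sorted (fun x y => y < x) (alphabar q s).
  apply: sorted_iota_map => i h1 h2.
  rewrite /= (_ : \sum_(i <= k < q.+1) s k = s i + \sum_(i.+1 <= k < q.+1) s k); first lia.
  by rewrite big_ltn //; lia.
split => //.
- apply/and3P; split.
  + by apply: sub_sorted srt => x y /= /ltnW.
  + apply/allP => x /mapP[i]; rewrite mem_iota => hi ->; lia.
  + apply/eqP; rewrite -hn -L1 -(L2 q) doubleK /alphabar sumnE big_map.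
    rewrite /index_iota subn1 /= -big_split /=.
    by apply: eq_bigr.
- move=> k k0; rewrite /diag_entry /delta_target nth_cat size_iota.
  case: (leqP k q) => hk.
    have -> : k.-1 < q by lia.
    rewrite nth_iota; last by lia.
    rewrite (eq_in_count (a2 := predT)); last first.
      move=> i; rewrite mem_iota => hi /=; rewrite pe_in; lia.
    rewrite count_predT size_iota; lia.
  have -> : k.-1 < q = false by lia.
  rewrite flat.
  have -> : k = q + (k - q) by lia.
  rewrite iotaD count_cat.
  rewrite [X in _ + X](eq_in_count (a2 := pred0)); last first.
    move=> i; rewrite mem_iota => hi /=; rewrite pe_out; lia.
  rewrite count_pred0 addn0; apply: eq_in_count => i; rewrite mem_iota => hi /=.
  rewrite pe_in; lia.
- move=> i hi; rewrite step //; lia.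
- rewrite pe_in; last by lia.
  rewrite /S big_nat1; lia.
Qed.
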